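(* For every constant $C_1 > 1$ there exists a constant $C_2 > 1$ such that the following holds. Let $\psi:\mathbb{R}\to\mathbb{R}$ satisfy $-\log(1 - x + \frac{x^2}{2}) \le \psi(x) \le \log(1 + x + \frac{x^2}{2})$ for all $x \in \mathbb{R}$. Let $\delta\in(0,1)$, suppose $n > C_2\log\frac{1}{\delta}$, and let $T = \sigma\sqrt{\frac{n}{2\log\frac{2}{\delta}}}$. Let $x_1,\dots,x_n$ be i.i.d. real samples with mean $\mu$ and variance at most $\sigma^2$, and let $\mu_0\in\mathbb{R}$ be a given initial estimate with $|\mu_0 - \mu| \le C_1\sigma\sqrt{\frac{\log\frac{1}{\delta}}{n}}$. Define \[ \widehat{\mu} = \mu_0 + \frac{T}{n}\sum_{i=1}^n \psi\!\left(\frac{x_i - \mu_0}{T}\right). \] Then with probability at least $1-\delta$, \[ |\widehat{\mu} - \mu| \le \left(1 + C_2\frac{\log\frac{1}{\delta}}{n}\right)\cdot\sigma\cdot\sqrt{\frac{2\log\frac{2}{\delta}}{n}}. \] *)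

(* Defs.v *)
From HB Require Import structures.
From mathcomp Require Import all_boot all_order all_algebra.
From mathcomp Require Import all_classical all_reals all_analysis.
Set Implicit Arguments. Unset Strict Implicit. Unset Printing Implicit Defensive.
Import Order.TTheory GRing.Theory Num.Theory.
Local Open Scope classical_set_scope.
Local Open Scope ring_scope.

Definition mutually_independent d (T : measurableType d) (R : realType)
  (P : probability T R) (n : nat) (X : 'I_n -> T -> R) : Prop :=
  forall B : 'I_n -> set R, (forall i, measurable (B i)) ->
    P (\bigcap_(i in [set: 'I_n]) (X i @^-1` B i)) =
    (\prod_(i < n) P (X i @^-1` B i))%E.

Definition identically_distributed d (T : measurableType d) (R : realType)
  (P : probability T R) (n : nat) (X : 'I_n -> T -> R) : Prop :=
  forall (i j : 'I_n) (B : set R), measurable B ->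
    P (X i @^-1` B) = P (X j @^-1` B).

Definition catoni_estimator (R : realType) (psi : R -> R) (n : nat)
  (mu0 Tt : R) (x : 'I_n -> R) : R :=
  mu0 + Tt / n%:R * \sum_(i < n) psi ((x i - mu0) / Tt).

(* Main.v *)
Require Import Defs.
From HB Require Import structures.
From mathcomp Require Import all_boot all_order all_algebra.
From mathcomp Require Import all_classical all_reals all_analysis.
From mathcomp Require Import measurable_realfun.
From mathcomp Require Import ring lra.
Import Order.TTheory GRing.Theory Num.Theory.
Local Open Scope classical_set_scope.
Local Open Scope ring_scope.

Module Helpers.
Import HBNNSimple.
Section fact.
Local Open Scope ereal_scope.
Context d (T : measurableType d) (R : realType) (mu : {measure set T -> \bar R}).

Lemma simple_split (W : T -> R) (Y : T -> R) (s : {nnsfun R >-> R}) :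
  measurable_fun setT W -> (forall x, 0 <= W x)%R -> measurable_fun setT Y ->
  \int[mu]_x (W x * s (Y x))%:E =
  \sum_(y \in range s) (y%:E * \int[mu]_x (W x * \1_(s @^-1` [set y]) (Y x))%:E).
Proof.
move=> mW W0 mY.
have rs0 : forall y, range s y -> (0 <= y)%R.
  by move=> y [z _ <-]; exact: fun_ge0.
have fr : finite_set (range s) by exact: fimfunP.
under eq_integral => x _ do rewrite fimfunE mulr_fsumr -fsumEFin //.
rewrite ge0_integral_fsum //.
- apply: eq_fsbigr => y /set_mem ry.
  rewrite -ge0_integralZl //; last 2 first.
  + by move=> x _; rewrite lee_fin mulr_ge0 // indicE.
  + by rewrite lee_fin rs0.
  + by apply: eq_integral => x _; rewrite -EFinM mulrCA.
  apply/measurable_EFinP; apply: measurable_funM => //.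
  apply: measurableT_comp => //.
- move=> y; apply/measurable_EFinP; apply: measurable_funM => //.
  apply: measurable_funM => //; apply: measurableT_comp => //.
- move=> y x _; rewrite lee_fin; apply: mulr_ge0 => //.
  have [ry|nry] := pselect (range s y).
    by apply: mulr_ge0; [exact: rs0|rewrite indicE].
  by rewrite indicE memNset ?mulr0 // => syx; apply: nry; exists (Y x).
Qed.

Lemma indic_comp (Y : T -> R) (A : set R) x :
  \1_A (Y x) = \1_(Y @^-1` A) x :> R.
Proof.
rewrite !indicE; have [h|h] := pselect (A (Y x)).
  by rewrite !mem_set.
by rewrite !memNset.
Qed.

Lemma simple_fact (W Y : T -> R) (c : R) :
  measurable_fun setT W -> (forall x, 0 <= W x)%R -> measurable_fun setT Y ->
  (0 <= c)%R ->
  (forall A, measurable A ->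
     \int[mu]_x (W x * \1_A (Y x))%:E = c%:E * mu (Y @^-1` A)) ->
  forall s : {nnsfun R >-> R},
  \int[mu]_x (W x * s (Y x))%:E = c%:E * \int[mu]_x (s (Y x))%:E.
Proof.
move=> mW W0 mY c0 hA s.
have rs0 : forall y, range s y -> (0 <= y)%R.
  by move=> y [z _ <-]; exact: fun_ge0.
rewrite simple_split //.
have -> : \int[mu]_x (s (Y x))%:E = \int[mu]_x ((fun=> 1%R) x * s (Y x))%:E.
  by apply: eq_integral => x _; rewrite mul1r.
rewrite [in RHS]simple_split //; try by move=> _; exact: ler01.
transitivity (\sum_(y \in range s) (c%:E * ((Num.max y 0)%:E * mu (Y @^-1` (s @^-1` [set y]))))).
  apply: eq_fsbigr => y /set_mem ry.
  rewrite hA; last exact: measurable_sfunP.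
  by rewrite (max_idPl (rs0 _ ry)) muleCA.
transitivity (c%:E * \sum_(y \in range s) ((Num.max y 0)%:E * mu (Y @^-1` (s @^-1` [set y])))).
  rewrite ge0_mule_fsumr //; move=> y.
  by rewrite mule_ge0 // lee_fin le_max lexx orbT.
congr (_ * _).
apply: eq_fsbigr => y /set_mem ry.
rewrite (max_idPl (rs0 _ ry)); congr (_ * _).
under eq_integral do rewrite mul1r indic_comp.
rewrite integral_indic ?setIT //.
rewrite -[X in measurable X]setTI; apply: mY => //; exact: measurable_sfunP.
Qed.

Lemma fact (W Y : T -> R) (c : R) :
  measurable_fun setT W -> (forall x, 0 <= W x)%R -> measurable_fun setT Y ->
  (0 <= c)%R ->
  (forall A, measurable A ->
     \int[mu]_x (W x * \1_A (Y x))%:E = c%:E * mu (Y @^-1` A)) ->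
  forall f : R -> R, measurable_fun setT f -> (forall y, 0 <= f y)%R ->
  \int[mu]_x (W x * f (Y x))%:E = c%:E * \int[mu]_x (f (Y x))%:E.
Proof.
move=> mW W0 mY c0 hA f mf f0.
have mg : measurable_fun setT (EFin \o f) by exact/measurable_EFinP.
pose h := nnsfun_approx measurableT mg.
have hcv y : (h n y)%:E @[n --> \oo] --> (f y)%:E.
  by apply: (cvg_nnsfun_approx measurableT mg) => // z _; rewrite lee_fin.
have hnd y : {homo (fun n => h n y) : n m / (n <= m)%N >-> (n <= m)%R}.
  by move=> n m nm; have /lefP := nd_nnsfun_approx measurableT mg nm; apply.
have mhY n : measurable_fun setT (fun x => h n (Y x)).
  by apply: measurableT_comp => //.
have E1 : \int[mu]_x (W x * f (Y x))%:E =
    limn (fun n => \int[mu]_x (W x * h n (Y x))%:E).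
  rewrite -monotone_convergence //.
  - apply: eq_integral => x _; apply/esym/cvg_lim => //.
    rewrite EFinM; under eq_fun do rewrite EFinM.
    exact: cvgeZl (hcv (Y x)).
  - by move=> n; apply/measurable_EFinP; exact: measurable_funM.
  - by move=> n x _; rewrite lee_fin mulr_ge0.
  - by move=> x _ n m nm; rewrite lee_fin ler_wpM2l // hnd.
have E2 : \int[mu]_x (f (Y x))%:E =
    limn (fun n => \int[mu]_x (h n (Y x))%:E).
  rewrite -monotone_convergence //.
  - by apply: eq_integral => x _; apply/esym/cvg_lim.
  - by move=> n; apply/measurable_EFinP.
  - by move=> n x _; rewrite lee_fin.
  - by move=> x _ n m nm; rewrite lee_fin hnd.
rewrite E1 E2 -limeMl //.
  by congr (limn _); apply/funext => n; exact: simple_fact.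
apply: ereal_nondecreasing_is_cvgn => n m nm.
apply: ge0_le_integral => //.
- by move=> x _; rewrite lee_fin.
- by apply/measurable_EFinP.
- by apply/measurable_EFinP.
- by move=> x _; rewrite lee_fin hnd.
Qed.

End fact.

Section quad.
Local Open Scope ereal_scope.
Context d (T : measurableType d) (R : realType) (P : probability T R).

Lemma quad_expect (X : T -> R) (a b c : R) : X \in Lfun P 2%:E ->
  \int[P]_x (a + b * X x + c * X x ^+ 2)%:E =
  a%:E + b%:E * 'E_P[X] + c%:E * 'E_P[X ^+ 2].
Proof.
move=> X2.
have X1 : X \in Lfun P 1 by apply: Lfun_subset12 => //; exact: fin_num_measure.
have XX : (X ^+ 2)%R \in Lfun P 1 by rewrite expr2; exact: Lfun2_mul_Lfun1.
transitivity ('E_P[((cst a \+ b \o* X) \+ c \o* (X ^+ 2))%R]).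
  rewrite unlock; apply: eq_integral => x _ /=.
  by rewrite -[(X x ^+ 2)%R]/((X ^+ 2)%R x) (mulrC b) (mulrC c).
rewrite expectationD ?expectationD ?expectation_cst ?expectationZl //.
all: try apply: rpredD.
all: try exact: Lfun_cst.
all: by apply: (@Lfun_scale _ _ _ P _ _ 1%R).
Qed.

Lemma markov_le (F : T -> R) (a : R) : measurable_fun setT F ->
  (forall x, 0 <= F x)%R -> (0 < a)%R ->
  a%:E * P [set x | a <= F x]%R <= \int[P]_x (F x)%:E.
Proof.
move=> mF F0 a0.
have mA : measurable [set x | a <= F x]%R.
  have -> : [set x | a <= F x]%R = F @^-1` `[a, +oo[%classic.
    by apply/seteqP; split => x /=; rewrite in_itv /= andbT.
  rewrite -[X in measurable X]setTI.
  by apply: mF => //; exact: measurable_itv.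
rewrite -[X in P X]setIT -integral_indic // -ge0_integralZl //.
all: try by [move=> x _; rewrite lee_fin indicE | rewrite lee_fin ltW].
under eq_integral do rewrite -EFinM.
apply: ge0_le_integral => //.
- by move=> x _; rewrite lee_fin mulr_ge0 // ?indicE // ltW.
- apply/measurable_EFinP; apply: measurable_funM => //; exact: measurable_indic.
- exact/measurable_EFinP.
- move=> x _; rewrite lee_fin indicE.
  by have [h|h] := pselect (a <= F x)%R; [rewrite mem_set // mulr1|rewrite memNset // mulr0].
by apply/measurable_EFinP; exact: measurable_indic.
Qed.
End quad.

Section prod_fact.
Local Open Scope ereal_scope.
Context d (T : measurableType d) (R : realType) (P : probability T R).
Variables (n : nat) (X : 'I_n -> T -> R).
Hypothesis mX : forall i, measurable_fun setT (X i).
Hypothesis indep : forall B : 'I_n -> set R, (forall i, measurable (B i)) ->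
    P (\bigcap_(i in [set: 'I_n]) (X i @^-1` B i)) =
    (\prod_(i < n) P (X i @^-1` B i))%E.

Lemma prod_indic (A : 'I_n -> set T) x :
  (\prod_(i < n) \1_(A i) x)%R = \1_(\bigcap_(i in [set: 'I_n]) A i) x :> R.
Proof.
have [hA|hA] := pselect (forall i, A i x).
  rewrite big1; last by move=> i _; rewrite indicE mem_set.
  by rewrite indicE mem_set // => i _; exact: hA.
have [i0 ni0] : exists i, ~ A i x.
  by apply: contra_notP hA => h i; apply: contra_notP h => ?; exists i.
rewrite (bigD1 i0) //= indicE memNset // mul0r indicE memNset //.
by move=> /(_ i0 Logic.I).
Qed.

Definition Qk k := forall h : 'I_n -> R -> R,
  (forall i, measurable_fun setT (h i)) -> (forall i y, (0 <= h i y)%R) ->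
  (forall i, \int[P]_x (h i (X i x))%:E \is a fin_num) ->
  (forall i : 'I_n, (k <= i)%N -> exists B, measurable B /\ h i = \1_B) ->
  \int[P]_x (\prod_(i < n) h i (X i x))%:E =
  \prod_(i < n) \int[P]_x (h i (X i x))%:E.

Lemma Q0 : Qk 0.
Proof.
move=> h mh h0 hfin hB.
have [B hB'] := choice (fun i => hB i (leq0n _)).
have eh i : h i = \1_(B i) by case: (hB' i).
have mB i : measurable (B i) by case: (hB' i).
transitivity (\int[P]_x (\1_(\bigcap_(i in [set: 'I_n]) (X i @^-1` B i)) x)%:E).
  by apply: eq_integral => x _; rewrite -prod_indic; under eq_bigr do rewrite eh indic_comp.
rewrite integral_indic ?setIT; last first.
  apply: fin_bigcap_measurable => // i _.
  by rewrite -[X in measurable X]setTI; apply: mX.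
by []. have HH := indep B mB. transitivity (\prod_(i < n) P (X i @^-1` B i)); first exact: HH.
 apply: eq_bigr => i _.
under eq_integral do rewrite eh indic_comp.
rewrite integral_indic ?setIT //.
by rewrite -[X in measurable X]setTI; apply: mX.
Qed.

Lemma Qstep k : (k < n)%N -> Qk k -> Qk k.+1.
Proof.
move=> kn IH h mh h0 hfin hB.
pose j : 'I_n := Ordinal kn.
pose W x := (\prod_(i < n | i != j) h i (X i x))%R.
pose ce := \prod_(i < n | i != j) \int[P]_x (h i (X i x))%:E.
have cefin : ce \is a fin_num by apply: prode_fin_num.
have ce0 : 0 <= ce.
  by apply: prode_ge0 => i _; apply: integral_ge0 => x _; rewrite lee_fin.
pose c := fine ce.
have cE : c%:E = ce by rewrite fineK.
have mW : measurable_fun setT W.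
  rewrite /W; under eq_fun do rewrite big_mkcond /=.
  apply: measurable_prod => i _.
  by case: (i != j) => //; apply: measurableT_comp.
have W0 x : (0 <= W x)%R by apply: prodr_ge0.
have key A : measurable A ->
    \int[P]_x (W x * \1_A (X j x))%:E = c%:E * P (X j @^-1` A).
  move=> mA.
  pose h' i := if i == j then \1_A else h i.
  have mXjA : measurable (X j @^-1` A).
    by rewrite -[X in measurable X]setTI; apply: mX.
  have eIA : \int[P]_x ((\1_A (X j x))%:E) = P (X j @^-1` A).
    under eq_integral do rewrite indic_comp.
    by rewrite integral_indic ?setIT.
  have m1 i : measurable_fun setT (h' i).
    by rewrite /h'; case: eqP => _ //; exact: measurable_indic.
  have m2 i y : (0 <= h' i y)%R by rewrite /h'; case: eqP => _ //; rewrite indicE.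
  have m3 i : \int[P]_x (h' i (X i x))%:E \is a fin_num.
    rewrite /h'; case: eqP => [->|_] //.
    by rewrite eIA fin_num_measure.
  have m4 (i : 'I_n) : (k <= i)%N -> exists B, measurable B /\ h' i = \1_B.
    move=> ki; rewrite /h'; case: eqP => [_|/eqP ij].
      by exists A.
    apply: hB; rewrite ltn_neqAle ki andbT.
    by apply: contra ij => /eqP kE; apply/eqP/val_inj.
  have HH := IH h' m1 m2 m3 m4.
  have e1 : \prod_(i < n | i != j) \int[P]_x (h' i (X i x))%:E = ce.
    by apply: eq_bigr => i ij; rewrite /h' (negbTE ij).
  have e2 x : (\prod_(i < n | i != j) h' i (X i x))%R = W x.
    by apply: eq_bigr => i ij; rewrite /h' (negbTE ij).
  have e3 : h' j = \1_A by rewrite /h' eqxx.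
  rewrite [RHS](bigD1 j) //= e1 e3 eIA in HH.
  have e4 : \int[P]_x (\prod_(i < n) h' i (X i x))%:E =
      \int[P]_x (\1_A (X j x) * W x)%:E.
    by apply: eq_integral => x _; rewrite (bigD1 j) //= e2 e3.
  rewrite e4 in HH.
  under eq_integral do rewrite mulrC.
  by rewrite HH cE muleC.
rewrite (bigD1 j) //=.
under eq_integral => x _ do rewrite (bigD1 j) //= mulrC -/(W x).
rewrite (@fact _ _ _ P W (X j) c mW W0 (mX j) _ key) //; last by rewrite -lee_fin cE.
by rewrite cE muleC.
Qed.

Lemma Qall : Qk n.
Proof.
suff : forall k, (k <= n)%N -> Qk k by apply.
elim=> [_|k ih kn]; first exact: Q0.
by apply: Qstep => //; apply: ih; exact: ltnW.
Qed.

Lemma prod_expect (f : R -> R) : measurable_fun setT f -> (forall y, (0 <= f y)%R) ->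
  (forall i, \int[P]_x (f (X i x))%:E \is a fin_num) ->
  \int[P]_x (\prod_(i < n) f (X i x))%:E =
  \prod_(i < n) \int[P]_x (f (X i x))%:E.
Proof.
move=> mf f0 ffin; apply: (Qall (fun=> f)) => // i ni.
by have := ltn_ord i; rewrite ltnNge ni.
Qed.


Lemma tail_bound (e mu sig mu0 Tt a : R) : (0 < Tt)%R ->
  (forall i, X i \in Lfun P 2%:E) -> (forall i, 'E_P[X i] = mu%:E) ->
  (forall i, 'V_P[X i] <= (sig ^+ 2)%:E) ->
  (0 <= 1 + e * (mu - mu0) / Tt + (sig ^+ 2 + (mu - mu0) ^+ 2) / (2 * Tt ^+ 2))%R ->
  (forall z, 0 <= 1 + e * ((z - mu0) / Tt) + ((z - mu0) / Tt) ^+ 2 / 2)%R ->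
  P [set x | expR a <= \prod_(i < n) (1 + e * ((X i x - mu0) / Tt) + ((X i x - mu0) / Tt) ^+ 2 / 2)]%R
  <= (expR (n%:R * (e * (mu - mu0) / Tt + (sig ^+ 2 + (mu - mu0) ^+ 2) / (2 * Tt ^+ 2)) - a))%:E.
Proof.
move=> Tt0 XL2 EX VX M0 g0.
set g := fun z => (1 + e * ((z - mu0) / Tt) + ((z - mu0) / Tt) ^+ 2 / 2)%R.
set M := (1 + e * (mu - mu0) / Tt + (sig ^+ 2 + (mu - mu0) ^+ 2) / (2 * Tt ^+ 2))%R.
have Tn0 : Tt != 0%R by rewrite gt_eqF.
pose a0 := (1 - e * mu0 / Tt + mu0 ^+ 2 / (2 * Tt ^+ 2))%R.
pose b0 := (e / Tt - mu0 / Tt ^+ 2)%R.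
pose c0 := (1 / (2 * Tt ^+ 2))%R.
have gE z : g z = (a0 + b0 * z + c0 * z ^+ 2)%R.
  by rewrite /g /a0 /b0 /c0; field.
have mg : measurable_fun setT g.
  rewrite (_ : g = fun z => (a0 + b0 * z + c0 * z ^+ 2)%R); last exact/funext.
  apply: measurable_funD; first apply: measurable_funD => //.
    by apply: measurable_funM.
have c00 : (0 <= c0)%R by rewrite /c0 divr_ge0 // mulr_ge0 // exprn_ge0 // ltW.
have Ig i : \int[P]_x (g (X i x))%:E \is a fin_num /\
    (0 <= fine (\int[P]_x (g (X i x))%:E) <= M)%R.
  have X2 := XL2 i.
  have XX : (X i ^+ 2)%R \in Lfun P 1 by rewrite expr2; exact: Lfun2_mul_Lfun1.
  have fX2 := expectation_fin_num XX.
  have hV := varianceE X2.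
  rewrite EX in hV.
  have -> : \int[P]_x (g (X i x))%:E = (a0 + b0 * mu + c0 * fine 'E_P[(X i ^+ 2)%R])%:E.
    under eq_integral do rewrite gE.
    by rewrite quad_expect // EX -(fineK fX2).
  rewrite /=; split => //.
  apply/andP; split.
    have : (0 <= \int[P]_x (g (X i x))%:E) by apply: integral_ge0 => x _; rewrite lee_fin; exact: g0.
    under eq_integral do rewrite gE.
    by rewrite quad_expect // EX -(fineK fX2) lee_fin.
  have := VX i; rewrite hV -(fineK fX2) -EFin_expe -EFinB lee_fin => hle.
  rewrite /M /a0 /b0 /c0.
  have -> : (1 + e * (mu - mu0) / Tt + (sig ^+ 2 + (mu - mu0) ^+ 2) / (2 * Tt ^+ 2) =
     1 - e * mu0 / Tt + mu0 ^+ 2 / (2 * Tt ^+ 2) + (e / Tt - mu0 / Tt ^+ 2) * mu +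
     1 / (2 * Tt ^+ 2) * (sig ^+ 2 + mu * mu))%R by field.
  rewrite lerD2l; apply: ler_wpM2l; first by rewrite divr_ge0 // mulr_ge0 // exprn_ge0 // ltW.
  by rewrite -expr2; lra.
have mF : measurable_fun setT (fun x => \prod_(i < n) g (X i x))%R.
  by apply: measurable_prod => i _; apply: measurableT_comp.
have F0 x : (0 <= \prod_(i < n) g (X i x))%R by apply: prodr_ge0 => i _; exact: g0.
have := @markov_le _ _ _ P _ (expR a) mF F0 (expR_gt0 a).
rewrite (@prod_expect g mg) //; last by move=> i; case: (Ig i).
rewrite (_ : \prod_(i < n) _ = (\prod_(i < n) fine (\int[P]_x (g (X i x))%:E))%:E); last first.
  by rewrite -prodEFin; apply: eq_bigr => i _; rewrite fineK //; case: (Ig i).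
have hprod : (\prod_(i < n) fine (\int[P]_x (g (X i x))%:E) <= expR (n%:R * (M - 1)))%R.
  apply: (@le_trans _ _ (\prod_(i < n) M)%R).
    by apply: ler_prod => i _; exact: (proj2 (Ig i)).
  apply: (@le_trans _ _ (\prod_(i < n) expR (M - 1))%R).
    apply: ler_prod => i _; rewrite M0 /=.
    by have := expR_ge1Dx (M - 1); rewrite addrC subrK.
  by rewrite -expR_sum sumr_const card_ord mulr_natl.
move=> hm.
have PA := fin_num_measure P [set x | expR a <= \prod_(i < n) g (X i x)]%R.
rewrite -(fineK (PA _)) in hm *; last first.
  have -> : [set x | expR a <= \prod_(i < n) g (X i x)]%R = (fun x => \prod_(i < n) g (X i x))%R @^-1` `[expR a, +oo[%classic.
    by apply/seteqP; split => x /=; rewrite in_itv /= andbT.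
  by rewrite -[X in measurable X]setTI; apply: mF => //; exact: measurable_itv.
rewrite -EFinM lee_fin in hm; rewrite lee_fin.
have hM1 : (M - 1 = e * (mu - mu0) / Tt + (sig ^+ 2 + (mu - mu0) ^+ 2) / (2 * Tt ^+ 2))%R.
  by rewrite /M; ring.
rewrite -hM1 expRB ler_pdivlMr ?expR_gt0 // mulrC.
exact: le_trans hm hprod.
Qed.


Lemma meas_tail (e mu0 Tt a : R) : (0 < Tt)%R ->
  measurable [set x | expR a <= \prod_(i < n) (1 + e * ((X i x - mu0) / Tt) + ((X i x - mu0) / Tt) ^+ 2 / 2)]%R.
Proof.
move=> Tt0.
set g := fun z => (1 + e * ((z - mu0) / Tt) + ((z - mu0) / Tt) ^+ 2 / 2)%R.
have Tn0 : Tt != 0%R by rewrite gt_eqF.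
pose a0 := (1 - e * mu0 / Tt + mu0 ^+ 2 / (2 * Tt ^+ 2))%R.
pose b0 := (e / Tt - mu0 / Tt ^+ 2)%R.
pose c0 := (1 / (2 * Tt ^+ 2))%R.
have gE z : g z = (a0 + b0 * z + c0 * z ^+ 2)%R.
  by rewrite /g /a0 /b0 /c0; field.
have mg : measurable_fun setT g.
  rewrite (_ : g = fun z => (a0 + b0 * z + c0 * z ^+ 2)%R); last exact/funext.
  apply: measurable_funD; first apply: measurable_funD => //.
    by apply: measurable_funM.
have mF : measurable_fun setT (fun x => \prod_(i < n) g (X i x))%R.
  by apply: measurable_prod => i _; apply: measurableT_comp.
have -> : [set x | expR a <= \prod_(i < n) g (X i x)]%R = (fun x => \prod_(i < n) g (X i x))%R @^-1` `[expR a, +oo[%classic.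
  by apply/seteqP; split => x /=; rewrite in_itv /= andbT.
by rewrite -[X in measurable X]setTI; apply: mF => //; exact: measurable_itv.
Qed.

End prod_fact.


End Helpers.
Import Helpers.

Theorem lemma11 (R : realType) (C1 : R) (hC1 : 1 < C1) :
  exists C2 : R, 1 < C2 /\
  forall (psi : R -> R),
    (forall x : R, - ln (1 - x + x ^+ 2 / 2) <= psi x /\
                   psi x <= ln (1 + x + x ^+ 2 / 2)) ->
  forall (delta : R), 0 < delta < 1 ->
  forall (n : nat), C2 * ln (delta^-1) < n%:R ->
  forall (sigma mu mu0 : R), 0 < sigma ->
  forall (d : measure_display) (T : measurableType d) (P : probability T R)
         (X : 'I_n -> {RV P >-> R}),
    mutually_independent P (fun i => X i) ->
    identically_distributed P (fun i => X i) ->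
    (forall i, (X i : T -> R) \in Lfun P 2%:E) ->
    (forall i, ('E_P[X i] = mu%:E)%E) ->
    (forall i, ('V_P[X i] <= (sigma ^+ 2)%:E)%E) ->
    `|mu0 - mu| <= C1 * sigma * Num.sqrt (ln (delta^-1) / n%:R) ->
  let Tt := sigma * Num.sqrt (n%:R / (2 * ln (2 / delta))) in
  exists E : set T, measurable E /\ ((1 - delta)%:E <= P E)%E /\
    forall w, E w ->
      `|catoni_estimator psi mu0 Tt (fun i => X i w) - mu|
        <= (1 + C2 * ln (delta^-1) / n%:R) * sigma
           * Num.sqrt (2 * ln (2 / delta) / n%:R).
Proof.
exists (C1 ^+ 2 / 2 + 1); split; first by nra.
move=> psi hpsi delta /andP[d0 d1] n hn sigma mu mu0 sig0 d T P X indep _ XL2 EX VX hmu0 Tt.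
set C2 := C1 ^+ 2 / 2 + 1.
set l := ln delta^-1.
have hl : 0 < l by apply: ln_gt0; rewrite invf_gt1.
have C20 : 0 < C2 by rewrite /C2; nra.
have n0 : 0 < n%:R :> R by apply: lt_trans hn; exact: mulr_gt0.
set L := ln (2 / delta).
have hL : 0 < L.
  apply: ln_gt0; rewrite ltr_pdivlMr //; lra.
set s := Num.sqrt (2 * L / n%:R).
have s0 : 0 < s by rewrite sqrtr_gt0 divr_gt0 // mulr_gt0.
have s2 : s ^+ 2 = 2 * L / n%:R by rewrite sqr_sqrtr // ltW // divr_gt0 // mulr_gt0.
have hTs : Tt * s = sigma.
  rewrite /Tt -mulrA -sqrtrM; last by rewrite ltW // divr_gt0 // mulr_gt0.
  have -> : n%:R / (2 * ln (2 / delta)) * (2 * L / n%:R) = 1.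
    by rewrite -/L; field; rewrite !lt0r_neq0.
  by rewrite sqrtr1 mulr1.
have Tt0 : 0 < Tt by rewrite /Tt mulr_gt0 // sqrtr_gt0 divr_gt0 // mulr_gt0.
set Dl := mu - mu0.
have hD2 : Dl ^+ 2 <= C1 ^+ 2 * sigma ^+ 2 * (l / n%:R).
  have r0 : 0 <= l / n%:R by rewrite ltW // divr_gt0.
  rewrite -[l / n%:R](sqr_sqrtr r0).
  set r := Num.sqrt (l / n%:R) in hmu0 *.
  have rr : 0 <= r by exact: sqrtr_ge0.
  move: hmu0; rewrite distrC -/Dl ler_norml => /andP[h1 h2].
  have K0 : 0 <= C1 * sigma * r by rewrite mulr_ge0 // mulr_ge0 // ltW // (lt_trans _ hC1).
  nra.
have mX : forall i, measurable_fun setT (X i : T -> R) := fun i => measurable_funPT (X i).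
have ind := indep.
have hMe e : e ^+ 2 = 1 ->
    0 <= 1 + e * (mu - mu0) / Tt + (sigma ^+ 2 + (mu - mu0) ^+ 2) / (2 * Tt ^+ 2).
  move=> e2.
  have -> : 1 + e * (mu - mu0) / Tt + (sigma ^+ 2 + (mu - mu0) ^+ 2) / (2 * Tt ^+ 2) =
     1 + e * ((mu - mu0) / Tt) + ((sigma / Tt) ^+ 2 + ((mu - mu0) / Tt) ^+ 2) / 2.
    by field; rewrite lt0r_neq0.
  set y := (mu - mu0) / Tt; set z := sigma / Tt.
  nra.
have hge e : e ^+ 2 = 1 -> forall z, 0 <= 1 + e * ((z - mu0) / Tt) + ((z - mu0) / Tt) ^+ 2 / 2.
  move=> e2 z; set y := (z - mu0) / Tt; nra.
have e1 : (1 : R) ^+ 2 = 1 by rewrite expr1n.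
have e2 : (-1 : R) ^+ 2 = 1 by rewrite sqrrN expr1n.
pose Ke (e : R) := n%:R * (e * (mu - mu0) / Tt + (sigma ^+ 2 + (mu - mu0) ^+ 2) / (2 * Tt ^+ 2)).
pose A (e : R) := [set x | expR (Ke e + L) <= \prod_(i < n) (1 + e * ((X i x - mu0) / Tt) + ((X i x - mu0) / Tt) ^+ 2 / 2)].
have mA e : measurable (A e) by exact: (@meas_tail _ _ _ n (fun i => X i) mX e mu0 Tt _ Tt0).
have hA e : e ^+ 2 = 1 -> (P (A e) <= (delta / 2)%:E)%E.
  move=> ee.
  have := @tail_bound _ _ _ P n (fun i => X i) mX ind e mu sigma mu0 Tt (Ke e + L) Tt0 XL2 EX VX (hMe e ee) (hge e ee).
  rewrite -/(Ke e) (_ : Ke e - (Ke e + L) = - L); last by ring.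
  rewrite expRN /L lnK ?posrE ?divr_gt0 // invf_div.
  by [].
exists (~` (A 1 `|` A (-1))); split.
  by apply: measurableC; apply: measurableU.
split.
  rewrite probability_setC; last by apply: measurableU.
  have hU := measureU2 P (mA 1%R) (mA (-1)%R).
  have hU' : (P (A 1%R `|` A (-1)%R) <= delta%:E)%E.
    apply: (le_trans hU); apply: le_trans; first exact: (leeD (hA 1%R e1) (hA _ e2)).
    by rewrite -EFinD lee_fin; lra.
  have fU : P (A 1%R `|` A (-1)%R) \is a fin_num by apply: fin_num_measure; apply: measurableU.
  rewrite -(fineK fU) in hU' *.
  by rewrite -EFinB lee_fin; rewrite lee_fin in hU'; lra.
move=> w /= hw.
have hp : \prod_(i < n) (1 + 1 * ((X i w - mu0) / Tt) + ((X i w - mu0) / Tt) ^+ 2 / 2) < expR (Ke 1 + L).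
  by rewrite ltNge; apply/negP => h; apply: hw; left.
have hq : \prod_(i < n) (1 + -1 * ((X i w - mu0) / Tt) + ((X i w - mu0) / Tt) ^+ 2 / 2) < expR (Ke (-1) + L).
  by rewrite ltNge; apply/negP => h; apply: hw; right.
set S := \sum_(i < n) psi ((X i w - mu0) / Tt).
have hS1 : S < Ke 1 + L.
  rewrite -ltr_expR; apply: le_lt_trans hp.
  rewrite expR_sum; apply: ler_prod => i _; rewrite expR_ge0 /=.
  set y := (X i w - mu0) / Tt.
  have [_ h] := hpsi y.
  have py : 0 < 1 + y + y ^+ 2 / 2 by nra.
  by rewrite mul1r -(lnK (x := 1 + y + y ^+ 2 / 2)) ?posrE // ler_expR.
have hS2 : - S < Ke (-1) + L.
  rewrite -ltr_expR; apply: le_lt_trans hq.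
  rewrite -sumrN expR_sum; apply: ler_prod => i _; rewrite expR_ge0 /=.
  set y := (X i w - mu0) / Tt.
  have [h _] := hpsi y.
  have py : 0 < 1 - y + y ^+ 2 / 2 by nra.
  rewrite mulN1r -(lnK (x := 1 - y + y ^+ 2 / 2)) ?posrE // ler_expR.
  by rewrite lerNl.
rewrite /catoni_estimator -/S.
clearbody Tt.
have Tn0 : Tt != 0 by rewrite lt0r_neq0.
have nn0 : n%:R != 0 :> R by rewrite lt0r_neq0.
have k0 : 0 < Tt / n%:R by rewrite divr_gt0.
set B := (sigma ^+ 2 + Dl ^+ 2) / (2 * Tt) + Tt * L / n%:R.
have k1 : Tt / n%:R * (Ke 1 + L) = Dl + B.
  by rewrite /Ke /B /Dl; field; rewrite nn0 Tn0.
have k2 : Tt / n%:R * (Ke (-1) + L) = - Dl + B.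
  by rewrite /Ke /B /Dl; field; rewrite nn0 Tn0.
have hB : `|mu0 + Tt / n%:R * S - mu| <= B.
  have h1 : Tt / n%:R * S < Tt / n%:R * (Ke 1 + L) by rewrite ltr_pM2l.
  have h2 : Tt / n%:R * - S < Tt / n%:R * (Ke (-1) + L) by rewrite ltr_pM2l.
  rewrite k1 in h1; rewrite k2 in h2.
  rewrite ler_norml; apply/andP; split; rewrite /Dl in h1 h2; lra.
apply: (le_trans hB).
have hTt' : Tt = sigma / s by rewrite -hTs mulfK // lt0r_neq0.
have hL' : L = n%:R * s ^+ 2 / 2 by rewrite s2; field.
have -> : B = sigma * s + Dl ^+ 2 * (s / (2 * sigma)).
  rewrite /B hTt' hL'; field.
  by rewrite !lt0r_neq0.
set t := s / (2 * sigma).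
have t0 : 0 < t by rewrite divr_gt0 // mulr_gt0.
have st : sigma * s = 2 * sigma ^+ 2 * t by rewrite /t; field; rewrite lt0r_neq0.
have ln0 : 0 <= l / n%:R by rewrite ltW // divr_gt0.
rewrite -mulrA st -(mulrA C2).
set q := l / n%:R in hD2 ln0 *.
have h5 : 0 <= (C1 ^+ 2 * sigma ^+ 2 * q - Dl ^+ 2) * t by apply: mulr_ge0; [rewrite subr_ge0 | exact: ltW].
have h6 : 0 <= q * sigma ^+ 2 * t by apply: mulr_ge0; [apply: mulr_ge0; [exact: ln0 | exact: sqr_ge0] | exact: ltW].
rewrite /C2; nra.
Qed.
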